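(* For every $s\in[0,1)$ there exists $C>0$ such that for all $t\ge1$, $\mathbb P_0(Y_t=0)\le C\,t^{-\frac{1-s}{2}}$, where $(Y_t)$ is the Markov chain on $\mathbb N$ with kernel $Q_s$ started at $0$.
   Context: $Q_s$ is the Markov kernel on $\mathbb N=\{0,1,\dots\}$ with $Q_s(0,1)=1$, $Q_s(r,r+1)=\max(\frac12-\frac s{4r},\frac14)$ and $Q_s(r,r-1)=1-Q_s(r,r+1)$ for $r\ge1$. *)

(* Defs.v *)
From Stdlib Require Import Reals Lra Lia Arith.
Open Scope R_scope.

Definition Qup (s : R) (r : nat) : R :=
  match r with
  | O => 1
  | S _ => Rmax (1/2 - s / (4 * INR r)) (1/4)
  end.

Definition Q (s : R) (x y : nat) : R :=
  if Nat.eqb y (S x) then Qup s x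
  else if Nat.eqb x (S y) then 1 - Qup s x
  else 0.

(* law s t y = P_0(Y_t = y) = Q_s^t(0,y), by Chapman–Kolmogorov
   P_0(Y_{t+1} = y) = sum_x P_0(Y_t = x) Q_s(x,y).  Since Q_s(x,y) = 0
   unless |x - y| = 1, only x in {0, ..., y+1} contribute, so the sum
   over all x in N equals the finite sum sum_{x=0}^{y+1}. *)
Fixpoint law (s : R) (t : nat) : nat -> R :=
  match t with
  | O => fun y => if Nat.eqb y 0 then 1 else 0
  | S t' => fun y => sum_f_R0 (fun x => law s t' x * Q s x y) (S y)
  end.

(* Main.v *)
Require Import Defs.
From Stdlib Require Import Reals Lra Lia Psatz Arith.
Open Scope R_scope.

Lemma Qup_S s k : 0 <= s < 1 -> Qup s (S k) = 1/2 - s / (4 * INR (S k)).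
Proof.
  intros Hs. cbv beta iota delta [Qup].
  assert (HX : 1 <= INR (S k)) by (rewrite S_INR; pose proof (pos_INR k); lra).
  assert (Hy : s / (4 * INR (S k)) <= 1/4).
  { unfold Rdiv. set (X := INR (S k)) in *.
    assert (H1 : 4 * X * / (4 * X) = 1) by (field; lra).
    assert (H2 : 0 < / (4 * X)) by (apply Rinv_0_lt_compat; lra).
    nra. }
  unfold Rmax. destruct (Rle_dec _ _); lra.
Qed.

Lemma Qup_bounds s k : 0 <= s < 1 -> 0 <= Qup s k <= 1.
Proof.
  intros Hs. destruct k. simpl. lra.
  rewrite Qup_S by auto.
  assert (HX : 1 <= INR (S k)) by (rewrite S_INR; pose proof (pos_INR k); lra).
  set (X := INR (S k)) in *.
  assert (H1 : 4 * X * / (4 * X) = 1) by (field; lra).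
  assert (H2 : 0 < / (4 * X)) by (apply Rinv_0_lt_compat; lra).
  unfold Rdiv. nra.
Qed.

Lemma q_pos s k : 0 <= s < 1 -> 0 < 1 - Qup s (S k).
Proof.
  intros Hs. rewrite Qup_S by auto.
  assert (HX : 1 <= INR (S k)) by (rewrite S_INR; pose proof (pos_INR k); lra).
  set (X := INR (S k)) in *.
  assert (H2 : 0 < / (4 * X)) by (apply Rinv_0_lt_compat; lra).
  unfold Rdiv. nra.
Qed.

Lemma p_pos s k : 0 <= s < 1 -> 0 < Qup s k.
Proof.
  intros Hs. destruct k. simpl; lra. rewrite Qup_S by auto.
  assert (HX : 1 <= INR (S k)) by (rewrite S_INR; pose proof (pos_INR k); lra).
  set (X := INR (S k)) in *.
  assert (H1 : 4 * X * / (4 * X) = 1) by (field; lra).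
  assert (H2 : 0 < / (4 * X)) by (apply Rinv_0_lt_compat; lra).
  unfold Rdiv. nra.
Qed.

Lemma sum_zero_upto (f : nat -> R) n : (forall x, (x <= n)%nat -> f x = 0) -> sum_f_R0 f n = 0.
Proof.
  induction n; intros H. simpl. apply H; lia.
  rewrite tech5, IHn. rewrite H; [lra|lia]. intros; apply H; lia.
Qed.

Lemma law_S0 s t : law s (S t) 0 = law s t 1 * (1 - Qup s 1).
Proof. simpl. unfold Q. simpl. ring. Qed.

Lemma law_SS s t k : law s (S t) (S k) =
  law s t k * Qup s k + law s t (S (S k)) * (1 - Qup s (S (S k))).
Proof.
  change (law s (S t) (S k)) with
    (sum_f_R0 (fun x => law s t x * Q s x (S k)) (S (S k))).
  rewrite !tech5.
  assert (H0 : forall x, (x <= k)%nat -> (x <> k)%nat -> Q s x (S k) = 0).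
  { intros x Hx Hxk. unfold Q.
    replace (Nat.eqb (S k) (S x)) with false by (symmetry; apply Nat.eqb_neq; lia).
    replace (Nat.eqb x (S (S k))) with false by (symmetry; apply Nat.eqb_neq; lia). reflexivity. }
  assert (Hk : Q s k (S k) = Qup s k).
  { unfold Q. rewrite Nat.eqb_refl. reflexivity. }
  assert (Hk1 : Q s (S k) (S k) = 0).
  { unfold Q. replace (Nat.eqb (S k) (S (S k))) with false by (symmetry; apply Nat.eqb_neq; lia).
    replace (Nat.eqb (S k) (S (S k))) with false by (symmetry; apply Nat.eqb_neq; lia). reflexivity. }
  assert (Hk2 : Q s (S (S k)) (S k) = 1 - Qup s (S (S k))).
  { unfold Q. replace (Nat.eqb (S k) (S (S (S k)))) with false by (symmetry; apply Nat.eqb_neq; lia).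
    rewrite Nat.eqb_refl. reflexivity. }
  rewrite Hk1, Hk2.
  destruct k.
  - simpl sum_f_R0. rewrite Hk. ring.
  - rewrite tech5, Hk. rewrite sum_zero_upto. ring.
    intros x Hx. rewrite H0 by lia. ring.
Qed.

Lemma law_zero s t y : (t < y)%nat -> law s t y = 0.
Proof.
  revert y; induction t; intros y Hy.
  - simpl. destruct y; [lia|reflexivity].
  - destruct y; [lia|]. rewrite law_SS, !IHt by lia. ring.
Qed.

Lemma law_nonneg s t y : 0 <= s < 1 -> 0 <= law s t y.
Proof.
  intros Hs. revert y; induction t; intros y.
  - simpl. destruct (Nat.eqb y 0); lra.
  - destruct y.
    + rewrite law_S0. pose proof (Qup_bounds s 1 Hs). pose proof (IHt 1%nat). nra.
    + rewrite law_SS. pose proof (Qup_bounds s y Hs). pose proof (Qup_bounds s (S (S y)) Hs).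
      pose proof (IHt y). pose proof (IHt (S (S y))). nra.
Qed.

Lemma sum0 (f : nat -> R) : sum_f_R0 f 0 = f 0%nat.
Proof. reflexivity. Qed.

Definition Pg s (g : nat -> R) x := Qup s x * g (S x) + (1 - Qup s x) * g (pred x).

Lemma boundary s t g M :
  sum_f_R0 (fun y => law s (S t) y * g y) M =
  sum_f_R0 (fun x => law s t x * Pg s g x) M +
  (law s t (S M) * (1 - Qup s (S M)) * g M - law s t M * Qup s M * g (S M)).
Proof.
  induction M.
  - rewrite !sum0, law_S0. unfold Pg. simpl pred. replace (Qup s 0) with 1 by reflexivity. ring.
  - rewrite !tech5, IHM, law_SS. unfold Pg. simpl pred. ring.
Qed.

Definition E s t (g : nat -> R) := sum_f_R0 (fun y => law s t y * g y) t.

Lemma E_S s t g : E s (S t) g = E s t (Pg s g).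
Proof.
  unfold E. rewrite boundary, tech5.
  rewrite (law_zero s t (S t)), (law_zero s t (S (S t))) by lia. ring.
Qed.

Lemma E_ext s t g g' : (forall y, g y = g' y) -> E s t g = E s t g'.
Proof. intros H. unfold E. apply sum_eq. intros; rewrite H; auto. Qed.

Lemma E_le s t g g' : 0 <= s < 1 -> (forall y, g y <= g' y) -> E s t g <= E s t g'.
Proof.
  intros Hs H. unfold E. apply sum_Rle. intros n _.
  apply Rmult_le_compat_l. apply law_nonneg; auto. apply H.
Qed.

Lemma E_lin s t a b g1 g2 :
  E s t (fun y => a * g1 y + b * g2 y) = a * E s t g1 + b * E s t g2.
Proof.
  unfold E.
  assert (G : forall n, sum_f_R0 (fun y => law s t y * (a * g1 y + b * g2 y)) n =
     a * sum_f_R0 (fun y => law s t y * g1 y) n + b * sum_f_R0 (fun y => law s t y * g2 y) n).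
  { induction n. rewrite !sum0. ring. rewrite !tech5, IHn. ring. }
  apply G.
Qed.

Lemma E_0 s g : E s 0 g = g 0%nat.
Proof. unfold E. simpl. ring. Qed.

Lemma E_mass s t : E s t (fun _ => 1) = 1.
Proof.
  induction t. apply E_0.
  rewrite E_S. rewrite (E_ext _ _ _ (fun _ => 1)). exact IHt. intros; unfold Pg; ring.
Qed.

Definition g2 (y : nat) := INR y * INR y.

Lemma Pg_g2 s y : 0 <= s < 1 -> Pg s g2 y <= g2 y + 1.
Proof.
  intros Hs. unfold Pg, g2. destruct y.
  - simpl. lra.
  - rewrite Qup_S by auto. simpl pred.
    rewrite (S_INR (S y)). rewrite (S_INR y).
    pose proof (pos_INR y).
    set (X := INR y + 1).
    assert (Heq : (1 / 2 - s / (4 * X)) * ((X + 1) * (X + 1)) +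
                  (1 - (1 / 2 - s / (4 * X))) * (INR y * INR y) = X * X + 1 - s).
    { replace (INR y) with (X - 1) by (unfold X; ring). field. unfold X; lra. }
    rewrite Heq. lra.
Qed.

Lemma E_g2 s t : 0 <= s < 1 -> E s t g2 <= INR t.
Proof.
  intros Hs. induction t.
  - rewrite E_0. unfold g2; simpl; lra.
  - rewrite E_S. rewrite S_INR.
    apply Rle_trans with (E s t (fun y => 1 * g2 y + 1 * 1)).
    + apply E_le; auto. intros y. pose proof (Pg_g2 s y Hs). lra.
    + rewrite E_lin, E_mass. lra.
Qed.

Fixpoint D s k := match k with O => 1 | S k' => D s k' * (1 - Qup s (S k')) / Qup s (S k') end.
Fixpoint F s y := match y with O => 0 | S k => F s k + D s k end.

Definition ind0 (y : nat) := if Nat.eqb y 0 then 1 else 0.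

Lemma Pg_F s y : 0 <= s < 1 -> Pg s (F s) y = 1 * F s y + 1 * ind0 y.
Proof.
  intros Hs. unfold Pg, ind0. destruct y.
  - simpl. ring.
  - pose proof (p_pos s (S y) Hs).
    change (F s (S (S y))) with (F s y + D s y + D s (S y)).
    change (D s (S y)) with (D s y * (1 - Qup s (S y)) / Qup s (S y)).
    change (F s (S y)) with (F s y + D s y). change (pred (S y)) with y.
    change (Nat.eqb (S y) 0) with false. cbv iota.
    field. lra.
Qed.

Lemma E_ind0 s t : E s t ind0 = law s t 0.
Proof.
  unfold E.
  assert (G : forall n, sum_f_R0 (fun y => law s t y * ind0 y) n = law s t 0).
  { induction n. rewrite sum0; unfold ind0; simpl; ring.
    rewrite tech5, IHn. unfold ind0. simpl. ring. }
  apply G.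
Qed.

Fixpoint Ls s t := match t with O => 0 | S t' => Ls s t' + law s t' 0 end.

Lemma E_F s t : 0 <= s < 1 -> E s t (F s) = Ls s t.
Proof.
  intros Hs. induction t.
  - rewrite E_0. reflexivity.
  - rewrite E_S. rewrite (E_ext _ _ _ _ (fun y => Pg_F s y Hs)).
    rewrite E_lin, IHt, E_ind0. simpl. ring.
Qed.

Fixpoint h s t y : R := match t with
  | O => if Nat.eqb y 0 then 1 else 0
  | S t' => match y with
            | O => h s t' 1%nat
            | S k => (1 - Qup s (S k)) * h s t' k + Qup s (S k) * h s t' (S (S k))
            end
  end.

Fixpoint pi s y := match y with O => 1 | S k => pi s k * Qup s k / (1 - Qup s (S k)) end.

Lemma law_pi_h s t y : 0 <= s < 1 -> law s t y = pi s y * h s t y.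
Proof.
  intros Hs. revert y. induction t; intros y.
  - destruct y; simpl; ring.
  - destruct y.
    + rewrite law_S0, IHt. pose proof (q_pos s 0 Hs).
      change (pi s 1) with (1 * Qup s 0 / (1 - Qup s 1)).
      change (Qup s 0) with 1. change (pi s 0) with 1.
      change (h s (S t) 0) with (h s t 1). field. lra.
    + rewrite law_SS, !IHt. pose proof (q_pos s y Hs). pose proof (q_pos s (S y) Hs).
      change (pi s (S (S y))) with (pi s (S y) * Qup s (S y) / (1 - Qup s (S (S y)))).
      change (pi s (S y)) with (pi s y * Qup s y / (1 - Qup s (S y))).
      change (h s (S t) (S y)) with
        ((1 - Qup s (S y)) * h s t y + Qup s (S y) * h s t (S (S y))).
      field. lra.
Qed.

Lemma h_mono s t y : 0 <= s < 1 -> h s t (S (S y)) <= h s t y.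
Proof.
  intros Hs. revert y. induction t; intros y.
  - simpl. destruct y; simpl; lra.
  - destruct y.
    + change (h s (S t) 2) with ((1 - Qup s 2) * h s t 1 + Qup s 2 * h s t 3).
      change (h s (S t) 0) with (h s t 1).
      pose proof (IHt 1%nat). pose proof (Qup_bounds s 2 Hs). nra.
    + change (h s (S t) (S (S (S y)))) with
        ((1 - Qup s (S (S (S y)))) * h s t (S (S y)) + Qup s (S (S (S y))) * h s t (S (S (S (S y))))).
      change (h s (S t) (S y)) with
        ((1 - Qup s (S y)) * h s t y + Qup s (S y) * h s t (S (S y))).
      pose proof (IHt y). pose proof (IHt (S (S y))).
      pose proof (Qup_bounds s (S y) Hs). pose proof (Qup_bounds s (S (S (S y))) Hs). nra.
Qed.

Lemma law0_mono s t : 0 <= s < 1 -> law s (S (S t)) 0 <= law s t 0.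
Proof.
  intros Hs. rewrite !law_pi_h by auto. change (pi s 0) with 1.
  change (h s (S (S t)) 0) with ((1 - Qup s 1) * h s t 0 + Qup s 1 * h s t 2).
  pose proof (h_mono s t 0 Hs). pose proof (Qup_bounds s 1 Hs). nra.
Qed.

Lemma Ls_bound s t : 0 <= s < 1 -> INR (S t) * law s t 0 <= 2 * Ls s (S t).
Proof.
  intros Hs.
  assert (G : forall t, INR (S t) * law s t 0 <= 2 * Ls s (S t) /\
                        INR (S (S t)) * law s (S t) 0 <= 2 * Ls s (S (S t))).
  { induction t0.
    - simpl. pose proof (law_nonneg s 0 0 Hs). pose proof (law_nonneg s 1 0 Hs). simpl in *. lra.
    - destruct IHt0 as [A B]. split. exact B.
      change (Ls s (S (S (S t0)))) with (Ls s (S t0) + law s (S t0) 0 + law s (S (S t0)) 0).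
      pose proof (law0_mono s t0 Hs). pose proof (law_nonneg s (S t0) 0 Hs).
      pose proof (law_nonneg s (S (S t0)) 0 Hs).
      rewrite !S_INR in *. pose proof (pos_INR t0). nra. }
  apply G.
Qed.

Lemma young x s : 0 < x -> 0 <= s <= 1 -> Rpower x s <= s * x + (1 - s).
Proof.
  intros Hx Hs. unfold Rpower.
  set (u := ln x).
  assert (Ex : x = exp u) by (unfold u; rewrite exp_ln; auto).
  set (A := exp (s * u)).
  assert (HA : 0 < A) by apply exp_pos.
  assert (HB : A * exp ((1 - s) * u) = x) by (unfold A; rewrite <- exp_plus, Ex; f_equal; ring).
  assert (HC : A * exp (- (s * u)) = 1) by (unfold A; rewrite <- exp_plus; replace (s*u + - (s*u)) with 0 by ring; apply exp_0).
  pose proof (exp_ineq1_le ((1 - s) * u)). pose proof (exp_ineq1_le (- (s * u))).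
  set (B := exp ((1 - s) * u)) in *. set (C := exp (- (s * u))) in *.
  assert (K : 1 <= s * B + (1 - s) * C) by nra.
  rewrite <- HB. nra.
Qed.

Lemma Rpower_0r x : Rpower x 0 = 1.
Proof. unfold Rpower. rewrite Rmult_0_l. apply exp_0. Qed.

Lemma Qratio s k : 0 <= s < 1 ->
  D s (S k) = D s k * ((2 * INR (S k) + s) / (2 * INR (S k) - s)).
Proof.
  intros Hs. change (D s (S k)) with (D s k * (1 - Qup s (S k)) / Qup s (S k)).
  rewrite Qup_S by auto.
  assert (HX : 1 <= INR (S k)) by (rewrite S_INR; pose proof (pos_INR k); lra).
  field. lra.
Qed.

Lemma D_pos s k : 0 <= s < 1 -> 0 < D s k.
Proof.
  intros Hs. induction k. simpl; lra.
  change (D s (S k)) with (D s k * (1 - Qup s (S k)) / Qup s (S k)).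
  pose proof (q_pos s k Hs). pose proof (p_pos s (S k) Hs).
  unfold Rdiv. apply Rmult_lt_0_compat. nra. apply Rinv_0_lt_compat; lra.
Qed.

Lemma Dbound s k : 0 <= s < 1 ->
  D s k * Rpower (s/2) s <= Rpower (INR k + 1) s.
Proof.
  intros Hs. destruct (Req_dec s 0) as [Hz | Hz].
  - subst s. rewrite !Rpower_0r.
    assert (forall k, D 0 k = 1).
    { induction k0. reflexivity. rewrite Qratio by lra. rewrite IHk0. field.
      rewrite S_INR; pose proof (pos_INR k0); lra. }
    rewrite H. lra.
  - assert (Hsp : 0 < s) by lra.
    assert (G : D s k * Rpower (s/2) s <= Rpower (INR k + s/2) s).
    { induction k.
      - simpl. replace (0 + s/2) with (s/2) by ring. lra.
      - rewrite Qratio by auto.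
        set (a := INR k + s/2) in *.
        assert (Ha : 0 < a) by (unfold a; pose proof (pos_INR k); lra).
        set (B := a + 1).
        replace (INR (S k) + s/2) with B by (unfold B, a; rewrite S_INR; ring).
        replace ((2 * INR (S k) + s) / (2 * INR (S k) - s)) with (B / (B - s))
          by (unfold B, a; rewrite S_INR; field; pose proof (pos_INR k); lra).
        assert (Y : Rpower (a / B) s <= (B - s) / B).
        { eapply Rle_trans. apply young. unfold B; apply Rdiv_lt_0_compat; lra. lra.
          right. unfold B. field. lra. }
        assert (M : Rpower a s = Rpower (a / B) s * Rpower B s).
        { rewrite Rpower_mult_distr. f_equal. field. unfold B; lra.
          unfold B; apply Rdiv_lt_0_compat; lra. unfold B; lra. }
        assert (PB : 0 < Rpower B s) by (unfold Rpower; apply exp_pos).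
        assert (HBs : 0 < B - s) by (unfold B; lra).
        apply Rle_trans with (Rpower a s * (B / (B - s))).
        + assert (Hr : 0 < B / (B - s)) by (apply Rdiv_lt_0_compat; unfold B in *; lra).
          set (r := B / (B - s)) in *.
          pose proof (Rmult_le_compat_r r _ _ (Rlt_le _ _ Hr) IHk). nra.
        + rewrite M. apply Rle_trans with ((B - s) / B * Rpower B s * (B / (B - s))).
          * apply Rmult_le_compat_r. apply Rlt_le, Rdiv_lt_0_compat; unfold B in *; lra.
            apply Rmult_le_compat_r; lra.
          * right. field. split; unfold B in *; lra. }
    eapply Rle_trans. exact G. apply Rle_Rpower_l. lra.
    pose proof (pos_INR k). lra.
Qed.

Lemma Rpower_pos x a : 0 < Rpower x a.
Proof. unfold Rpower; apply exp_pos. Qed.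

Lemma Fbound s y : 0 <= s < 1 ->
  F s y * Rpower (s/2) s <= INR y * Rpower (INR y + 1) s.
Proof.
  intros Hs. induction y.
  - simpl. lra.
  - change (F s (S y)) with (F s y + D s y).
    pose proof (Dbound s y Hs). rewrite S_INR.
    pose proof (pos_INR y).
    assert (M : Rpower (INR y + 1) s <= Rpower (INR y + 1 + 1) s)
      by (apply Rle_Rpower_l; lra).
    nra.
Qed.

Lemma Fbound2 s y : 0 <= s < 1 ->
  F s y * Rpower (s/2) s <= Rpower (INR y + 1) (1 + s).
Proof.
  intros Hs. eapply Rle_trans. apply Fbound; auto.
  rewrite Rpower_plus, Rpower_1 by (pose proof (pos_INR y); lra).
  pose proof (Rpower_pos (INR y + 1) s). nra.
Qed.

Lemma split_bound s n Z : 0 <= s < 1 -> 0 < n -> 1 <= Z ->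
  Rpower Z (1 + s) <= Rpower n ((1 + s)/2) + Z * Z * Rpower n ((s - 1)/2).
Proof.
  intros Hs Hn HZ.
  set (r := Rpower n (/2)).
  assert (Hr : 0 < r) by apply Rpower_pos.
  assert (E1 : Rpower n ((1 + s)/2) = Rpower r (1 + s))
    by (unfold r; rewrite Rpower_mult; f_equal; field).
  assert (E2 : Rpower n ((s - 1)/2) = Rpower r (s - 1))
    by (unfold r; rewrite Rpower_mult; f_equal; field).
  rewrite E1, E2.
  pose proof (Rpower_pos r (s - 1)). pose proof (Rpower_pos r (1 + s)).
  destruct (Rle_dec Z r) as [L | L].
  - assert (Rpower Z (1 + s) <= Rpower r (1 + s)) by (apply Rle_Rpower_l; lra).
    nra.
  - assert (EZ : Rpower Z (1 + s) = Z * Z * Rpower Z (s - 1)).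
    { replace (1 + s) with (INR 2 + (s - 1)) by (simpl; ring).
      rewrite Rpower_plus, Rpower_pow by lra. simpl. ring. }
    assert (Rpower Z (s - 1) <= Rpower r (s - 1)).
    { replace (s - 1) with (- (1 - s)) by ring. rewrite !Rpower_Ropp.
      apply Rinv_le_contravar. apply Rpower_pos.
      apply Rle_Rpower_l; lra. }
    rewrite EZ. assert (0 < Z * Z) by nra. nra.
Qed.

Lemma EF_bound s N : 0 <= s < 1 -> (1 <= N)%nat ->
  Rpower (s/2) s * Ls s N <= 5 * Rpower (INR N) ((1 + s)/2).
Proof.
  intros Hs HN. set (c := Rpower (s/2) s).
  set (n := INR N).
  assert (Hn : 1 <= n) by (unfold n; apply (le_INR 1); auto).
  rewrite <- E_F by auto.
  assert (L1 : c * E s N (F s) = E s N (fun y => c * F s y + 0 * F s y)) by (rewrite (E_lin s N c 0 (F s) (F s)); ring).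
  rewrite L1.
  set (A := Rpower n ((1 + s)/2)). set (Bq := Rpower n ((s - 1)/2)).
  apply Rle_trans with (E s N (fun y => A * 1 + Bq * (3 * g2 y + 1))).
  - apply E_le; auto. intros y.
    pose proof (Fbound2 s y Hs).
    pose proof (split_bound s n (INR y + 1) Hs ltac:(lra) ltac:(pose proof (pos_INR y); lra)).
    assert (Hz : (INR y + 1) * (INR y + 1) <= 3 * g2 y + 1).
    { unfold g2. destruct y. simpl; lra. rewrite S_INR. pose proof (pos_INR y). nra. }
    assert (0 < Bq) by apply Rpower_pos.
    fold c in H. fold A in H0. fold Bq in H0. assert (Bq * ((INR y + 1) * (INR y + 1)) <= Bq * (3 * g2 y + 1)) by (apply Rmult_le_compat_l; lra). lra.
  - rewrite E_lin, E_mass.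
    assert (L2 : E s N (fun y => 3 * g2 y + 1) = E s N (fun y => 3 * g2 y + 1 * 1))
      by (apply E_ext; intros; ring).
    rewrite L2, E_lin, E_mass.
    pose proof (E_g2 s N Hs). fold n in H.
    assert (0 < Bq) by apply Rpower_pos.
    assert (HBq : n * Bq = A).
    { unfold A, Bq. rewrite <- (Rpower_1 n) at 1 by lra. rewrite <- Rpower_plus. f_equal. field. }
    nra.
Qed.

Theorem lemma6p3 :
  forall s : R, 0 <= s < 1 ->
  exists C : R, 0 < C /\
    forall t : nat, (1 <= t)%nat ->
      law s t 0%nat <= C * Rpower (INR t) (- ((1 - s) / 2)).
Proof.
  intros s Hs. set (c := Rpower (s/2) s).
  assert (Hc : 0 < c) by apply Rpower_pos.
  exists (10 / c). split. apply Rdiv_lt_0_compat; lra.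
  intros t Ht.
  pose proof (Ls_bound s t Hs).
  pose proof (EF_bound s (S t) Hs ltac:(lia)). fold c in H0.
  set (m := INR (S t)) in *.
  assert (Hm : 2 <= m) by (unfold m; apply (le_INR 2); lia).
  assert (Ht1 : 1 <= INR t) by (apply (le_INR 1); auto).
  assert (K : law s t 0 <= 10 / c * (Rpower m ((1 + s)/2) / m)).
  { apply (Rmult_le_reg_l m). lra.
    apply (Rmult_le_reg_l c). lra.
    replace (c * (m * (10 / c * (Rpower m ((1 + s) / 2) / m)))) with (10 * Rpower m ((1 + s)/2))
      by (field; lra).
    nra. }
  eapply Rle_trans. exact K.
  apply Rmult_le_compat_l. apply Rlt_le, Rdiv_lt_0_compat; lra.
  assert (E3 : Rpower m ((1 + s)/2) / m = Rpower m (- ((1 - s)/2))).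
  { replace (- ((1 - s)/2)) with ((1 + s)/2 + Ropp 1) by field.
    rewrite Rpower_plus, Rpower_Ropp, Rpower_1 by lra. field; lra. }
  rewrite E3. rewrite !Rpower_Ropp. apply Rinv_le_contravar. apply Rpower_pos.
  apply Rle_Rpower_l. lra. split. lra. unfold m. rewrite S_INR. lra.
Qed.
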